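(* Let $0<\epsilon<1$ and assume $E\setminus T\neq\emptyset$. Run the SimpleSolver process for $K=\left\lceil \tau \ln\!\big(\mathrm{st}(T)\,\tau/\epsilon\big)\right\rceil$ cycle updates, obtaining $f_K$ and its tree induced voltages $v_K$. Then \[ \mathbb{E}\big[\xi_r(f_K)\big]\le (1+\epsilon)\,\xi_r(f^* )\qquad\text{and}\qquad \mathbb{E}\,\big\|v_K-L^\dagger\chi\big\|_L\le \sqrt{\epsilon}\,\big\|L^\dagger\chi\big\|_L . \]
   Context: Let $G=(V,E,w)$ be a connected undirected graph with $n=|V|$, $m=|E|$, edge weights $w_e>0$ and resistances $r_e=1/w_e$. Each edge has a fixed orientation $(a,b)$; for $f\in\mathbb{R}^E$ write $f(b,a):=-f(a,b)$. The incidence matrix $B\in\mathbb{R}^{E\times V}$ has $B_{(a,b),c}=1$ if $c=a$, $-1$ if $c=b$, $0$ otherwise; $R=\mathrm{diag}(r_e)_{e\in E}$; the Laplacian is $L=B^TR^{-1}B$ and $L^\dagger$ is its Moore–Penrose pseudoinverse; $\|x\|_M=\sqrt{x^TMx}$. The energy of $f\in\mathbb{R}^E$ is $\xi_r(f)=f^TRf$. Fix $\chi\in\mathbb{R}^V$ with $\sum_a\chi(a)=0$; $f$ is feasible if $B^Tf=\chi$; $f^*$ is the unique feasible $f$ minimizing $\xi_r(f)$. Let $T\subseteq E$ be a spanning tree. For vertices $a,b$, $\pi_{(a,b)}\in\mathbb{R}^E$ is the unit flow from $a$ to $b$ along the unique $a$–$b$ path in $T$, and $P_{(a,b)}$ is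 the set of edges of that path. For $e=(a,b)\in E\setminus T$, the tree cycle vector is $c_e=\mathbf{1}_e-\pi_{(a,b)}$, $R_e=c_e^TRc_e$, and $\Delta_e(f)=f^TRc_e$. The tree condition number is $\tau=\sum_{e\in E\setminus T}R_e/r_e$. The stretch of $e=(a,b)\in E$ is $\mathrm{st}(e)=\frac{1}{r_e}\sum_{e'\in P_{(a,b)}}r_{e'}$ and $\mathrm{st}(T)=\sum_{e\in E}\mathrm{st}(e)$. Fix a root $s\in V$; the tree induced voltages of $f$ are $v(a)=\sum r_{e'}f(e')$, summing over the edges $e'$ of the tree path from $a$ to $s$, each traversed in the direction of the path (with the antisymmetry convention). Let $p$ be the probability distribution on $E\setminus T$ with $p_e=\frac{R_e}{r_e\tau}$. The SimpleSolver process: $f_0$ is the unique feasible flow supported on $T$; for $i\ge1$, $e_i$ is drawn from $p$ independently of everything else and $f_i=f_{i-1}-\frac{\Delta_{e_i}(f_{i-1})}{R_{e_i}}c_{e_i}$; $v_i$ denotes the tree induced voltages of $f_i$. *)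

(* Defs.v *)
From Stdlib Require Import Reals List Lia.
Open Scope R_scope.

(* A weighted graph: vertices 0..nV-1, edges 0..nE-1; edge e is oriented
   (ea e, eb e) and has weight wt e. *)
Record graph := mkGraph { nV : nat; nE : nat; ea : nat -> nat; eb : nat -> nat; wt : nat -> R }.

Definition rsum (k : nat) (g : nat -> R) : R := fold_right Rplus 0 (map g (seq 0 k)).

Definition well_formed (G : graph) : Prop :=
  (forall e, (e < nE G)%nat ->
     (ea G e < nV G)%nat /\ (eb G e < nV G)%nat /\ ea G e <> eb G e /\ 0 < wt G e) /\
  (forall e e', (e < nE G)%nat -> (e' < nE G)%nat -> e <> e' ->
     ~ ((ea G e = ea G e' /\ eb G e = eb G e') \/ (ea G e = eb G e' /\ eb G e = ea G e'))).

Definition res (G : graph) (e : nat) : R := / wt G e.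

(* a step (e, d) traverses edge e, forward (ea -> eb) iff d = true *)
Definition src (G : graph) (st : nat * bool) : nat := if snd st then ea G (fst st) else eb G (fst st).
Definition dst (G : graph) (st : nat * bool) : nat := if snd st then eb G (fst st) else ea G (fst st).

Fixpoint walk (G : graph) (T : nat -> bool) (a b : nat) (p : list (nat * bool)) : Prop :=
  match p with
  | nil => a = b
  | st :: q => (fst st < nE G)%nat /\ T (fst st) = true /\ src G st = a /\ walk G T (dst G st) b q
  end.

Definition tree_path (G : graph) (T : nat -> bool) (a b : nat) (p : list (nat * bool)) : Prop :=
  walk G T a b p /\ NoDup (a :: map (dst G) p).

Definition acyclic (G : graph) (T : nat -> bool) : Prop :=
  ~ (exists a p, p <> nil /\ walk G T a a p /\ NoDup (map fst p)).

Definition spanning_tree (G : graph) (T : nat -> bool) : Prop :=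
  (forall e, T e = true -> (e < nE G)%nat) /\
  (forall a b, (a < nV G)%nat -> (b < nV G)%nat -> exists p, walk G T a b p) /\
  acyclic G T.

Definition Bmat (G : graph) (e c : nat) : R :=
  if Nat.eqb c (ea G e) then 1 else if Nat.eqb c (eb G e) then -1 else 0.

Definition Lap (G : graph) (u v : nat) : R :=
  rsum (nE G) (fun e => Bmat G e u * / res G e * Bmat G e v).

Definition feasible (G : graph) (chi : nat -> R) (f : nat -> R) : Prop :=
  forall c, (c < nV G)%nat -> rsum (nE G) (fun e => Bmat G e c * f e) = chi c.

Definition energy (G : graph) (f : nat -> R) : R :=
  rsum (nE G) (fun e => f e * res G e * f e).

Definition supported_on (G : graph) (T : nat -> bool) (f : nat -> R) : Prop :=
  forall e, (e < nE G)%nat -> T e = false -> f e = 0.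

Definition path_flow (p : list (nat * bool)) (e : nat) : R :=
  fold_right Rplus 0 (map (fun st : nat * bool => if Nat.eqb (fst st) e then (if snd st then 1 else -1) else 0) p).

Definition path_res (G : graph) (p : list (nat * bool)) : R :=
  fold_right Rplus 0 (map (fun st : nat * bool => res G (fst st)) p).

(* pth a b : the tree path from a to b *)
Section TreeQuantities.
Variables (G : graph) (T : nat -> bool) (pth : nat -> nat -> list (nat * bool)).

Definition cyc (e j : nat) : R :=
  (if Nat.eqb j e then 1 else 0) - path_flow (pth (ea G e) (eb G e)) j.

Definition Rcyc (e : nat) : R := rsum (nE G) (fun j => cyc e j * res G j * cyc e j).

Definition Delta (e : nat) (f : nat -> R) : R := rsum (nE G) (fun j => f j * res G j * cyc e j).

Definition tau : R := rsum (nE G) (fun e => if T e then 0 else Rcyc e / res G e).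

Definition stretch (e : nat) : R := / res G e * path_res G (pth (ea G e) (eb G e)).

Definition stT : R := rsum (nE G) stretch.

Definition prob (e : nat) : R := Rcyc e / (res G e * tau).

Definition update (e : nat) (f : nat -> R) : nat -> R :=
  fun j => f j - Delta e f / Rcyc e * cyc e j.

(* expectation of g(f_K) where f_0 = f and f_i = update e_i f_{i-1},
   e_i i.i.d. with law prob on E \ T *)
Fixpoint expect (K : nat) (g : (nat -> R) -> R) (f : nat -> R) : R :=
  match K with
  | O => g f
  | S k => rsum (nE G) (fun e => if T e then 0 else prob e * expect k g (update e f))
  end.

Definition volt (s : nat) (f : nat -> R) (a : nat) : R :=
  fold_right Rplus 0
    (map (fun st : nat * bool => (if snd st then 1 else -1) * res G (fst st) * f (fst st)) (pth a s)).

End TreeQuantities.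

Definition matmul (n : nat) (A B : nat -> nat -> R) (i j : nat) : R :=
  rsum n (fun k => A i k * B k j).
Definition matvec (n : nat) (X : nat -> nat -> R) (x : nat -> R) (i : nat) : R :=
  rsum n (fun k => X i k * x k).

Definition is_pinv (n : nat) (A X : nat -> nat -> R) : Prop :=
  forall i j, (i < n)%nat -> (j < n)%nat ->
    matmul n A (matmul n X A) i j = A i j /\
    matmul n X (matmul n A X) i j = X i j /\
    matmul n A X i j = matmul n A X j i /\
    matmul n X A i j = matmul n X A j i.

Definition Lnorm (G : graph) (x : nat -> R) : R :=
  sqrt (rsum (nV G) (fun u => rsum (nV G) (fun v => x u * Lap G u v * x v))).

(* ceiling: ceil x = - floor (- x), floor y = up y - 1 *)
Definition ceilR (x : R) : Z := (- (up (- x) - 1))%Z.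

(* Main.v *)
Require Import Defs.
From Stdlib Require Import Reals List Lia Lra Psatz Classical ZArith.
Open Scope R_scope.


Definition lsum {A} (l : list A) (f : A -> R) : R := fold_right Rplus 0 (map f l).

Lemma rsum_lsum k f : rsum k f = lsum (seq 0 k) f.
Proof. reflexivity. Qed.

Lemma lsum_cons {A} (x : A) l f : lsum (x :: l) f = f x + lsum l f.
Proof. reflexivity. Qed.
Lemma lsum_nil {A} (f : A -> R) : lsum nil f = 0.
Proof. reflexivity. Qed.

Lemma lsum_app {A} (l1 l2 : list A) f : lsum (l1 ++ l2) f = lsum l1 f + lsum l2 f.
Proof. induction l1; simpl app; [rewrite lsum_nil; lra|]. rewrite !lsum_cons, IHl1. lra. Qed.

Lemma lsum_ext {A} (l : list A) f g : (forall x, In x l -> f x = g x) -> lsum l f = lsum l g.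
Proof. induction l; intros H; [reflexivity|]. rewrite !lsum_cons. rewrite H by (left; auto).
  rewrite IHl; auto. intros; apply H; right; auto. Qed.

Lemma lsum_plus {A} (l : list A) f g : lsum l (fun x => f x + g x) = lsum l f + lsum l g.
Proof. induction l; [rewrite !lsum_nil; lra|]. rewrite !lsum_cons, IHl. lra. Qed.

Lemma lsum_minus {A} (l : list A) f g : lsum l (fun x => f x - g x) = lsum l f - lsum l g.
Proof. induction l; [rewrite !lsum_nil; lra|]. rewrite !lsum_cons, IHl. lra. Qed.

Lemma lsum_scal {A} (l : list A) c f : lsum l (fun x => c * f x) = c * lsum l f.
Proof. induction l; [rewrite !lsum_nil; lra|]. rewrite !lsum_cons, IHl. lra. Qed.

Lemma lsum_scalr {A} (l : list A) c f : lsum l (fun x => f x * c) = lsum l f * c.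
Proof. induction l; [rewrite !lsum_nil; lra|]. rewrite !lsum_cons, IHl. lra. Qed.

Lemma lsum_zero {A} (l : list A) : lsum l (fun _ => 0) = 0.
Proof. induction l; [reflexivity|]. rewrite lsum_cons, IHl. lra. Qed.

Lemma lsum_le {A} (l : list A) f g : (forall x, In x l -> f x <= g x) -> lsum l f <= lsum l g.
Proof. induction l; intros H; [rewrite !lsum_nil; lra|]. rewrite !lsum_cons.
  assert (f a <= g a) by (apply H; left; auto).
  assert (lsum l f <= lsum l g) by (apply IHl; intros; apply H; right; auto). lra. Qed.

Lemma lsum_nonneg {A} (l : list A) f : (forall x, In x l -> 0 <= f x) -> 0 <= lsum l f.
Proof. intros H. rewrite <- (lsum_zero l). apply lsum_le. auto. Qed.

Lemma lsum_swap {A B} (l1 : list A) (l2 : list B) f :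
  lsum l1 (fun x => lsum l2 (fun y => f x y)) = lsum l2 (fun y => lsum l1 (fun x => f x y)).
Proof. induction l1.
  - rewrite lsum_nil. symmetry. rewrite <- (lsum_zero l2). apply lsum_ext. intros; reflexivity.
  - rewrite lsum_cons, IHl1. rewrite <- lsum_plus. apply lsum_ext. intros. reflexivity. Qed.

Lemma lsum_delta (l : list nat) k h : NoDup l -> In k l ->
  lsum l (fun i => if Nat.eqb i k then h i else 0) = h k.
Proof. induction l; intros Hn Hi; [destruct Hi|]. inversion Hn; subst.
  rewrite lsum_cons. destruct Hi as [<-|Hi].
  - rewrite Nat.eqb_refl. rewrite (lsum_ext l _ (fun _ => 0)), lsum_zero; [lra|].
    intros x Hx. destruct (Nat.eqb_spec x a); [subst; contradiction|reflexivity].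
  - rewrite IHl by auto. destruct (Nat.eqb_spec a k); [subst; contradiction|lra]. Qed.

Lemma lsum_single_le {A} (l : list A) f k : (forall x, In x l -> 0 <= f x) -> In k l -> f k <= lsum l f.
Proof. induction l; intros H Hi; [destruct Hi|]. rewrite lsum_cons. destruct Hi as [<-|Hi].
  - assert (0 <= lsum l f) by (apply lsum_nonneg; intros; apply H; right; auto). lra.
  - assert (0 <= f a) by (apply H; left; auto).
    assert (f k <= lsum l f) by (apply IHl; auto; intros; apply H; right; auto). lra. Qed.

Lemma lsum_zero_nonneg {A} (l : list A) f : (forall x, In x l -> 0 <= f x) -> lsum l f = 0 ->
  forall x, In x l -> f x = 0.
Proof. induction l; intros H Hs x Hx; [destruct Hx|]. rewrite lsum_cons in Hs.
  assert (0 <= f a) by (apply H; left; auto).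
  assert (0 <= lsum l f) by (apply lsum_nonneg; intros; apply H; right; auto).
  destruct Hx as [<-|Hx]; [lra|]. apply IHl; auto; [intros; apply H; right; auto|lra]. Qed.

Lemma lsum_nonzero (l : list nat) f k : NoDup l -> In k l -> lsum l f = 0 -> f k <> 0 ->
  exists k', In k' l /\ k' <> k /\ f k' <> 0.
Proof. intros Hn Hk Hs Hf. apply NNPP. intros Hne. apply Hf. rewrite <- Hs.
  rewrite <- (lsum_delta l k f) by auto. apply lsum_ext. intros x Hx.
  destruct (Nat.eqb_spec x k); [reflexivity|]. apply NNPP. intro Hx0. apply Hne. exists x. auto. Qed.

Lemma in_seq0 k i : In i (seq 0 k) <-> (i < k)%nat.
Proof. rewrite in_seq. lia. Qed.

Lemma rsum_ext k f g : (forall i, (i < k)%nat -> f i = g i) -> rsum k f = rsum k g.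
Proof. intros H. rewrite !rsum_lsum. apply lsum_ext. intros x Hx. apply H. apply in_seq0; auto. Qed.

Lemma rsum_plus k f g : rsum k (fun x => f x + g x) = rsum k f + rsum k g.
Proof. apply lsum_plus. Qed.
Lemma rsum_minus k f g : rsum k (fun x => f x - g x) = rsum k f - rsum k g.
Proof. apply lsum_minus. Qed.
Lemma rsum_scal k c f : rsum k (fun x => c * f x) = c * rsum k f.
Proof. apply lsum_scal. Qed.
Lemma rsum_scalr k c f : rsum k (fun x => f x * c) = rsum k f * c.
Proof. apply lsum_scalr. Qed.
Lemma rsum_zero k : rsum k (fun _ => 0) = 0.
Proof. apply lsum_zero. Qed.
Lemma rsum_le k f g : (forall i, (i < k)%nat -> f i <= g i) -> rsum k f <= rsum k g.
Proof. intros H. apply lsum_le. intros x Hx. apply H. apply in_seq0; auto. Qed.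
Lemma rsum_nonneg k f : (forall i, (i < k)%nat -> 0 <= f i) -> 0 <= rsum k f.
Proof. intros H. apply lsum_nonneg. intros x Hx. apply H. apply in_seq0; auto. Qed.
Lemma rsum_swap n m f : rsum n (fun i => rsum m (fun j => f i j)) = rsum m (fun j => rsum n (fun i => f i j)).
Proof. apply lsum_swap. Qed.
Lemma rsum_delta k j h : (j < k)%nat -> rsum k (fun i => if Nat.eqb i j then h i else 0) = h j.
Proof. intros. apply lsum_delta; [apply seq_NoDup|apply in_seq0; auto]. Qed.
Lemma rsum_delta' k j h : (j < k)%nat -> rsum k (fun i => if Nat.eqb j i then h i else 0) = h j.
Proof. intros. rewrite <- (rsum_delta k j h) by auto. apply rsum_ext. intros. rewrite Nat.eqb_sym; auto. Qed.
Lemma rsum_single_le k f j : (forall i, (i < k)%nat -> 0 <= f i) -> (j < k)%nat -> f j <= rsum k f.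
Proof. intros H Hj. apply lsum_single_le; [|apply in_seq0; auto]. intros x Hx; apply H; apply in_seq0; auto. Qed.
Lemma rsum_zero_nonneg k f : (forall i, (i < k)%nat -> 0 <= f i) -> rsum k f = 0 ->
  forall i, (i < k)%nat -> f i = 0.
Proof. intros H Hs i Hi. apply (lsum_zero_nonneg (seq 0 k) f); auto; [|apply in_seq0; auto].
  intros x Hx; apply H; apply in_seq0; auto. Qed.
Lemma rsum_nonzero k f j : (j < k)%nat -> rsum k f = 0 -> f j <> 0 ->
  exists j', (j' < k)%nat /\ j' <> j /\ f j' <> 0.
Proof. intros Hj Hs Hf. destruct (lsum_nonzero (seq 0 k) f j) as [j' [H1 [H2 H3]]]; auto.
  apply seq_NoDup. apply in_seq0; auto. exists j'. rewrite in_seq0 in H1. auto. Qed.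

Lemma quad_cs A B C : 0 <= A -> (forall t, 0 <= A*t*t - 2*C*t + B) -> C*C <= A*B.
Proof. intros HA H. destruct (Rle_lt_or_eq_dec 0 A HA) as [Hp|H0].
  - specialize (H (C/A)). assert (A*(C/A)*(C/A) - 2*C*(C/A) + B = B - C*C/A) by (field; lra).
    rewrite H0 in H. assert (C*C/A <= B) by lra.
    apply (Rmult_le_compat_l A) in H1; [|lra]. replace (A*(C*C/A)) with (C*C) in H1 by (field; lra). lra.
  - subst A. destruct (Req_dec C 0) as [->|Hc]; [lra|].
    specialize (H ((B+1)/(2*C))). replace (0*((B+1)/(2*C))*((B+1)/(2*C)) - 2*C*((B+1)/(2*C)) + B) with (-1) in H
      by (field; auto). lra. Qed.

Lemma wcs n (w a b : nat -> R) : (forall i, (i < n)%nat -> 0 < w i) ->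
  rsum n (fun i => a i * b i) * rsum n (fun i => a i * b i)
  <= rsum n (fun i => w i * a i * a i) * rsum n (fun i => b i * b i / w i).
Proof. intros Hw. apply quad_cs.
  - apply rsum_nonneg. intros i Hi. specialize (Hw i Hi). nra.
  - intros t. assert (E: rsum n (fun i => w i * (a i * t - b i / w i) * (a i * t - b i / w i)) =
      rsum n (fun i => w i * a i * a i) * t * t - 2 * rsum n (fun i => a i * b i) * t + rsum n (fun i => b i * b i / w i)).
    { rewrite <- !rsum_scalr, <- rsum_scal, <- rsum_scalr, <- rsum_minus, <- rsum_plus.
      apply rsum_ext. intros i Hi. specialize (Hw i Hi). field. lra. }
    rewrite <- E. apply rsum_nonneg. intros i Hi. specialize (Hw i Hi).
    rewrite Rmult_assoc. apply Rmult_le_pos; [lra|]. apply Rle_0_sqr. Qed.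


Definition sgnst (st : nat * bool) : R := if snd st then 1 else -1.
Definition indv (c a : nat) : R := if Nat.eqb c a then 1 else 0.

Section Walks.
Variable G : graph.
Variable T : nat -> bool.
Hypothesis WF : well_formed G.

Notation m := (nE G).
Notation n := (nV G).

Lemma edge_ok e : (e < m)%nat -> (ea G e < n)%nat /\ (eb G e < n)%nat /\ ea G e <> eb G e /\ 0 < wt G e.
Proof. intros H. apply (proj1 WF e H). Qed.

Lemma res_pos e : (e < m)%nat -> 0 < res G e.
Proof. intros H. unfold res. apply Rinv_0_lt_compat. apply edge_ok; auto. Qed.

Lemma Bmat_eq e c : (e < m)%nat -> Bmat G e c = indv c (ea G e) - indv c (eb G e).
Proof. intros H. destruct (edge_ok e H) as [_ [_ [Hne _]]]. unfold Bmat, indv.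
  destruct (Nat.eqb_spec c (ea G e)); destruct (Nat.eqb_spec c (eb G e)); subst; try lra.
  congruence. Qed.

Lemma step_ends st : (src G st = ea G (fst st) /\ dst G st = eb G (fst st)) \/
                     (src G st = eb G (fst st) /\ dst G st = ea G (fst st)).
Proof. unfold src, dst. destruct (snd st); auto. Qed.

Lemma step_B st c : (fst st < m)%nat -> sgnst st * Bmat G (fst st) c = indv c (src G st) - indv c (dst G st).
Proof. intros H. rewrite Bmat_eq by auto. unfold sgnst, src, dst. destruct (snd st); lra. Qed.

Lemma walk_steps a b p : walk G T a b p -> forall st, In st p -> (fst st < m)%nat /\ T (fst st) = true.
Proof. revert a. induction p as [|s0 q IH]; intros a Hw st Hi; [destruct Hi|].
  destruct Hw as [H1 [H2 [H3 H4]]]. destruct Hi as [<-|Hi]; auto. eapply IH; eauto. Qed.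

Lemma pf_lsum p j : path_flow p j = lsum p (fun st => if Nat.eqb (fst st) j then sgnst st else 0).
Proof. reflexivity. Qed.

Lemma pf_cons st q j : path_flow (st :: q) j = (if Nat.eqb (fst st) j then sgnst st else 0) + path_flow q j.
Proof. reflexivity. Qed.

Lemma pf_exchange p h : (forall st, In st p -> (fst st < m)%nat) ->
  rsum m (fun j => path_flow p j * h j) = lsum p (fun st => sgnst st * h (fst st)).
Proof. induction p as [|st q IH]; intros Hp.
  - rewrite lsum_nil. rewrite (rsum_ext m _ (fun _ => 0)) by (intros; unfold path_flow; simpl; lra).
    apply rsum_zero.
  - rewrite lsum_cons. rewrite <- IH by (intros; apply Hp; right; auto).
    rewrite <- (rsum_delta' m (fst st) (fun j => sgnst st * h j)) by (apply Hp; left; auto).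
    rewrite <- rsum_plus. apply rsum_ext. intros i Hi. rewrite pf_cons.
    destruct (Nat.eqb (fst st) i); lra. Qed.

Lemma walk_div a b p : walk G T a b p -> forall c,
  rsum m (fun e => Bmat G e c * path_flow p e) = indv c a - indv c b.
Proof. intros Hw c. rewrite (rsum_ext m _ (fun e => path_flow p e * Bmat G e c)) by (intros; lra).
  rewrite pf_exchange by (intros st Hi; eapply walk_steps; eauto).
  revert a Hw. induction p as [|st q IH]; intros a Hw.
  - simpl in Hw. subst. rewrite lsum_nil. lra.
  - destruct Hw as [H1 [H2 [H3 H4]]]. rewrite lsum_cons, (IH _ H4). rewrite step_B by auto.
    rewrite H3. lra. Qed.

Lemma pf_supp a b p j : walk G T a b p -> T j = false -> path_flow p j = 0.
Proof. intros Hw Hj. rewrite pf_lsum.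
  transitivity (lsum p (fun _ => 0)); [|apply lsum_zero]. apply lsum_ext. intros st Hi.
  destruct (walk_steps a b p Hw st Hi) as [_ HT].
  destruct (Nat.eqb_spec (fst st) j); [congruence|auto]. Qed.

Lemma walk_app a b p1 p2 : walk G T a b (p1 ++ p2) <-> exists c, walk G T a c p1 /\ walk G T c b p2.
Proof. revert a. induction p1 as [|st q IH]; intros a; simpl.
  - split; [intros H; exists a; auto|intros [c [-> H]]; auto].
  - split.
    + intros [H1 [H2 [H3 H4]]]. apply IH in H4. destruct H4 as [c [H5 H6]]. exists c. auto.
    + intros [c [[H1 [H2 [H3 H4]]] H5]]. repeat split; auto. apply IH. exists c; auto. Qed.

Lemma src_in c b q st : walk G T c b q -> In st q -> In (src G st) (c :: map (dst G) q).
Proof. revert c. induction q as [|s0 q IH]; intros c Hw Hi; [destruct Hi|].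
  destruct Hw as [H1 [H2 [H3 H4]]]. destruct Hi as [<-|Hi]; [left; auto|].
  right. apply IH; auto. Qed.

Lemma nodup_edges c b p : walk G T c b p -> NoDup (c :: map (dst G) p) -> NoDup (map fst p).
Proof. revert c. induction p as [|st q IH]; intros c Hw Hn; [constructor|].
  destruct Hw as [H1 [H2 [H3 H4]]]. simpl in Hn. apply NoDup_cons_iff in Hn. destruct Hn as [Hc Hn'].
  pose proof Hn' as Hn''. apply NoDup_cons_iff in Hn''. destruct Hn'' as [Hd Hq].
  simpl. constructor; [|eapply IH; eauto; exact Hn'].
  intros Hin. apply in_map_iff in Hin. destruct Hin as [st2 [Hf Hi2]].
  assert (Hdi : In (dst G st2) (map (dst G) q)) by (apply in_map; auto).
  destruct (step_ends st) as [[E1 E2]|[E1 E2]]; destruct (step_ends st2) as [[F1 F2]|[F1 F2]];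
  rewrite Hf in F1, F2; rewrite <- H3 in Hc;
  first [ rewrite F2, <- E2 in Hdi | rewrite F2, <- E1 in Hdi ];
  first [ apply Hd; exact Hdi | apply Hc; right; exact Hdi ]. Qed.

Lemma pf_at p st : NoDup (map fst p) -> In st p -> path_flow p (fst st) = sgnst st.
Proof. induction p as [|s0 q IH]; intros Hn Hi; [destruct Hi|]. simpl in Hn.
  inversion Hn as [|? ? Hnot Hq]; subst. rewrite pf_cons. destruct Hi as [<-|Hi].
  - rewrite Nat.eqb_refl. rewrite pf_lsum.
    rewrite (lsum_ext q _ (fun _ => 0)), lsum_zero; [lra|].
    intros x Hx. destruct (Nat.eqb_spec (fst x) (fst s0)); auto.
    exfalso. apply Hnot. rewrite <- e. apply in_map; auto.
  - rewrite IH by auto. destruct (Nat.eqb_spec (fst s0) (fst st)); [|lra].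
    exfalso. apply Hnot. rewrite e. apply in_map; auto. Qed.

Lemma pf_self a b p : walk G T a b p -> NoDup (a :: map (dst G) p) ->
  rsum m (fun j => path_flow p j * res G j * path_flow p j) = path_res G p.
Proof. intros Hw Hn. pose proof (nodup_edges a b p Hw Hn) as He.
  rewrite (rsum_ext m _ (fun j => path_flow p j * (res G j * path_flow p j))) by (intros; lra).
  rewrite pf_exchange by (intros st Hi; eapply walk_steps; eauto).
  change (path_res G p) with (lsum p (fun st => res G (fst st))). apply lsum_ext.
  intros st Hi. rewrite pf_at by auto. unfold sgnst. destruct (snd st); lra. Qed.

End Walks.


Section Circ.
Variable G : graph.
Variable T : nat -> bool.
Hypothesis WF : well_formed G.
Hypothesis Hacyc : acyclic G T.
Variable g : nat -> R.
Hypothesis Hcirc : forall c, (c < nV G)%nat -> rsum (nE G) (fun e => Bmat G e c * g e) = 0.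
Hypothesis Hsupp : forall e, (e < nE G)%nat -> T e = false -> g e = 0.

Notation m := (nE G).
Notation n := (nV G).

Definition Inv a b p := walk G T a b p /\ NoDup (a :: map (dst G) p) /\
  exists st q, p = st :: q /\ g (fst st) <> 0.

Lemma walk_vertices a b p : walk G T a b p -> p <> nil -> forall x, In x (a :: map (dst G) p) -> (x < n)%nat.
Proof. intros Hw Hp x Hx. destruct p as [|st q]; [congruence|].
  assert (Hd : forall s0, In s0 (st :: q) -> (dst G s0 < n)%nat).
  { intros s0 Hs. destruct (walk_steps G T a b _ Hw s0 Hs) as [Hm _].
    destruct (edge_ok G WF _ Hm) as [A1 [A2 _]]. destruct (step_ends G s0) as [[_ E]|[_ E]]; rewrite E; auto. }
  destruct Hx as [<-|Hx].
  - destruct Hw as [H1 [_ [H3 _]]]. rewrite <- H3. destruct (edge_ok G WF _ H1) as [A1 [A2 _]].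
    destruct (step_ends G st) as [[E _]|[E _]]; rewrite E; auto.
  - apply in_map_iff in Hx. destruct Hx as [s0 [<- Hs]]. auto. Qed.

Lemma inv_len a b p : Inv a b p -> (S (length p) <= n)%nat.
Proof. intros [Hw [Hn [st [q [Hp _]]]]].
  assert (length (a :: map (dst G) p) <= length (seq 0 n))%nat.
  { apply NoDup_incl_length; auto. intros x Hx. apply in_seq0. eapply walk_vertices; eauto. congruence. }
  rewrite length_seq in H. simpl in H. rewrite length_map in H. lia. Qed.

Lemma inv_extend a b p : Inv a b p -> exists u p', Inv u b p' /\ length p' = S (length p).
Proof. intros [Hw [Hn [st1 [q [Hp Hg1]]]]]. subst p.
  pose proof Hw as Hw0. destruct Hw as [H1 [H2 [H3 H4]]].
  destruct (edge_ok G WF _ H1) as [A1 [A2 [A3 _]]].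
  assert (Ha : (a < n)%nat) by (rewrite <- H3; destruct (step_ends G st1) as [[E _]|[E _]]; rewrite E; auto).
  assert (HB : Bmat G (fst st1) a <> 0).
  { rewrite (Bmat_eq G WF) by auto. unfold indv. rewrite <- H3.
    destruct (step_ends G st1) as [[E _]|[E _]]; rewrite E.
    - rewrite Nat.eqb_refl. destruct (Nat.eqb_spec (ea G (fst st1)) (eb G (fst st1))); [congruence|lra].
    - rewrite Nat.eqb_refl. destruct (Nat.eqb_spec (eb G (fst st1)) (ea G (fst st1))); [congruence|lra]. }
  destruct (rsum_nonzero m (fun e => Bmat G e a * g e) (fst st1)) as [e' [He'm [He'ne Hne0]]].
  { exact H1. } { apply Hcirc; exact Ha. }
  { cbv beta. intro Hz. apply Rmult_integral in Hz. destruct Hz; auto. }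
  simpl in Hne0.
  assert (Hge : g e' <> 0) by (intro Hz; apply Hne0; rewrite Hz; lra).
  assert (HBe : Bmat G e' a <> 0) by (intro Hz; apply Hne0; rewrite Hz; lra).
  assert (HT : T e' = true) by (destruct (T e') eqn:E; auto; exfalso; apply Hge; apply Hsupp; auto).
  destruct (edge_ok G WF _ He'm) as [B1 [B2 [B3 _]]].
  assert (Hae : a = ea G e' \/ a = eb G e').
  { unfold Bmat in HBe. destruct (Nat.eqb_spec a (ea G e')); auto.
    destruct (Nat.eqb_spec a (eb G e')); auto. lra. }
  set (st' := (e', Nat.eqb (eb G e') a)).
  assert (Hdst : dst G st' = a).
  { unfold dst, st'; simpl. destruct (Nat.eqb_spec (eb G e') a); auto. destruct Hae; congruence. }
  set (u := src G st').
  assert (Hu : u <> a).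
  { unfold u. rewrite <- Hdst. unfold src, dst, st'; simpl. destruct (Nat.eqb (eb G e') a); auto. }
  assert (Hun : (u < n)%nat) by (unfold u, src, st'; simpl; destruct (Nat.eqb (eb G e') a); auto).
  assert (He : NoDup (map fst (st1 :: q))) by (eapply nodup_edges; eauto).
  assert (Hnot : ~ In e' (map fst (st1 :: q))).
  { intro Hin. apply in_map_iff in Hin. destruct Hin as [st [Hf Hi]].
    destruct Hi as [<-|Hi]; [congruence|].
    apply NoDup_cons_iff in Hn. destruct Hn as [Hn1 _]. apply Hn1.
    assert (Hs : In (src G st) (map (dst G) (st1 :: q))) by (eapply src_in; eauto).
    assert (Hd : In (dst G st) (map (dst G) (st1 :: q))) by (right; apply in_map; auto).
    destruct (step_ends G st) as [[E1 E2]|[E1 E2]]; rewrite Hf in E1, E2;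
      destruct Hae as [Hae|Hae]; rewrite Hae; first [rewrite <- E1; exact Hs | rewrite <- E2; exact Hd]. }
  destruct (In_dec Nat.eq_dec u (map (dst G) (st1 :: q))) as [Hin|Hin].
  - exfalso. apply Hacyc. apply in_map_iff in Hin. destruct Hin as [stk [Hk Hik]].
    apply in_split in Hik. destruct Hik as [p1 [p2 Hsp]].
    exists u, (st' :: p1 ++ stk :: nil). split; [congruence|]. split.
    + simpl. split; [exact He'm|]. split; [exact HT|]. split; [reflexivity|].
      rewrite Hdst. rewrite Hsp in Hw0. apply walk_app in Hw0. destruct Hw0 as [x [Hx1 Hx2]].
      apply walk_app. exists x. split; auto. destruct Hx2 as [K1 [K2 [K3 _]]]. simpl. auto.
    + simpl. constructor.
      * intro Hin. apply Hnot. rewrite Hsp, map_app. rewrite map_app in Hin. apply in_app_or in Hin.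
        apply in_or_app. destruct Hin as [Hin|Hin]; [left; auto|right]. simpl in Hin. destruct Hin as [Hin|[]].
        left; auto.
      * rewrite Hsp, map_app in He. rewrite map_app. simpl in He.
        replace (map fst p1 ++ fst stk :: map fst p2) with ((map fst p1 ++ fst stk :: nil) ++ map fst p2) in He
          by (rewrite <- app_assoc; reflexivity).
        eapply NoDup_app_remove_r; eauto.
  - exists u, (st' :: st1 :: q). split; [|reflexivity]. split; [|split].
    + split; [exact He'm|]. split; [exact HT|]. split; [reflexivity|]. rewrite Hdst. exact Hw0.
    + change (NoDup (u :: dst G st' :: map (dst G) (st1 :: q))). rewrite Hdst.
      constructor; [|exact Hn]. intros [Hx|Hx]; [congruence|contradiction].
    + exists st', (st1 :: q). split; auto. Qed.

Lemma no_inv N : forall a b p, Inv a b p -> (n <= length p + N)%nat -> False.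
Proof. induction N; intros a b p Hi Hl.
  - pose proof (inv_len a b p Hi). lia.
  - destruct (inv_extend a b p Hi) as [u [p' [Hi' Hl']]]. apply (IHN u b p' Hi'). lia. Qed.

Lemma circ_zero : forall e, (e < m)%nat -> g e = 0.
Proof. intros e He. destruct (Req_dec (g e) 0) as [|Hne]; auto. exfalso.
  assert (HT : T e = true) by (destruct (T e) eqn:E; auto; exfalso; apply Hne; apply Hsupp; auto).
  destruct (edge_ok G WF _ He) as [A1 [A2 [A3 _]]].
  apply (no_inv n (ea G e) (eb G e) ((e, true) :: nil)); [|lia].
  split; [|split].
  - simpl. unfold src, dst; simpl. auto.
  - simpl. unfold dst; simpl. constructor; [intros [H|[]]; congruence|]. constructor; [intros []|constructor].
  - exists (e, true), nil. auto. Qed.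

End Circ.


Section Main.
Variable G : graph.
Variable T : nat -> bool.
Variable pth : nat -> nat -> list (nat * bool).
Variable s : nat.
Hypothesis WF : well_formed G.
Hypothesis HST : spanning_tree G T.
Hypothesis Hpth : forall a b, (a < nV G)%nat -> (b < nV G)%nat -> tree_path G T a b (pth a b).
Hypothesis Hs : (s < nV G)%nat.

Notation m := (nE G).
Notation n := (nV G).

Definition ip (x y : nat -> R) := rsum m (fun j => x j * res G j * y j).
Definition pe e := path_flow (pth (ea G e) (eb G e)).
Definition div (x : nat -> R) c := rsum m (fun e => Bmat G e c * x e).
Definition circ (x : nat -> R) := forall c, (c < n)%nat -> div x c = 0.
Definition tsupp (x : nat -> R) := forall e, (e < m)%nat -> T e = false -> x e = 0.

Lemma Hacyc : acyclic G T. Proof. apply HST. Qed.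

Lemma circ_zero' x : circ x -> tsupp x -> forall e, (e < m)%nat -> x e = 0.
Proof. intros H1 H2. apply (circ_zero G T WF Hacyc x); auto. Qed.

Lemma ip_sym x y : ip x y = ip y x.
Proof. unfold ip. apply rsum_ext. intros; lra. Qed.

Lemma ip_lin a b x y z : ip (fun j => a * x j + b * y j) z = a * ip x z + b * ip y z.
Proof. unfold ip. rewrite <- !rsum_scal, <- rsum_plus. apply rsum_ext. intros; lra. Qed.

Lemma ip_ext x x' y y' : (forall j, (j < m)%nat -> x j = x' j) -> (forall j, (j < m)%nat -> y j = y' j) ->
  ip x y = ip x' y'.
Proof. intros H1 H2. unfold ip. apply rsum_ext. intros j Hj. rewrite H1, H2; auto. Qed.

Lemma ip_self_nonneg x : 0 <= ip x x.
Proof. unfold ip. apply rsum_nonneg. intros j Hj. pose proof (res_pos G WF j Hj).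
  rewrite Rmult_comm, <- Rmult_assoc. apply Rmult_le_pos; [|lra]. nra. Qed.

Lemma ip_cs x y : ip x y * ip x y <= ip y y * ip x x.
Proof. apply quad_cs; [apply ip_self_nonneg|]. intros t.
  assert (E : ip (fun j => 1 * x j + (-t) * y j) (fun j => 1 * x j + (-t) * y j) =
     ip y y * t * t - 2 * ip x y * t + ip x x).
  { rewrite ip_lin. rewrite (ip_sym x), (ip_sym y). rewrite !ip_lin. rewrite (ip_sym y x). ring. }
  rewrite <- E. apply ip_self_nonneg. Qed.

Lemma energy_ip f : energy G f = ip f f. Proof. reflexivity. Qed.
Lemma Delta_ip e f : Defs.Delta G pth e f = ip f (cyc G pth e). Proof. reflexivity. Qed.
Lemma Rcyc_ip e : Rcyc G pth e = ip (cyc G pth e) (cyc G pth e). Proof. reflexivity. Qed.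

Lemma pth_walk a b : (a < n)%nat -> (b < n)%nat -> walk G T a b (pth a b).
Proof. intros. apply Hpth; auto. Qed.

Lemma edge_n e : (e < m)%nat -> (ea G e < n)%nat /\ (eb G e < n)%nat.
Proof. intros H. destruct (edge_ok G WF e H) as [A [B _]]. auto. Qed.

Lemma pth_div a b c : (a < n)%nat -> (b < n)%nat -> div (path_flow (pth a b)) c = indv c a - indv c b.
Proof. intros. unfold div. apply (walk_div G T WF a b). apply pth_walk; auto. Qed.

Lemma pth_supp a b j : (a < n)%nat -> (b < n)%nat -> T j = false -> path_flow (pth a b) j = 0.
Proof. intros. eapply (pf_supp G T a b); eauto. apply pth_walk; auto. Qed.

Lemma div_delta e c : (e < m)%nat -> div (fun j => if Nat.eqb j e then 1 else 0) c = Bmat G e c.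
Proof. intros He. unfold div. rewrite <- (rsum_delta m e (fun j => Bmat G j c)) by auto.
  apply rsum_ext. intros j Hj. destruct (Nat.eqb j e); lra. Qed.

Lemma div_lin a b x y c : div (fun j => a * x j + b * y j) c = a * div x c + b * div y c.
Proof. unfold div. rewrite <- !rsum_scal, <- rsum_plus. apply rsum_ext. intros; lra. Qed.

Lemma div_ext x y c : (forall j, (j < m)%nat -> x j = y j) -> div x c = div y c.
Proof. intros H. unfold div. apply rsum_ext. intros j Hj. rewrite H; auto. Qed.

Lemma cyc_circ e : (e < m)%nat -> circ (cyc G pth e).
Proof. intros He c Hc. destruct (edge_n e He) as [A B].
  rewrite (div_ext _ (fun j => 1 * (if Nat.eqb j e then 1 else 0) + (-1) * pe e j)) by
    (intros; unfold cyc, pe; lra).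
  rewrite div_lin, div_delta by auto. unfold pe. rewrite pth_div by auto.
  rewrite (Bmat_eq G WF) by auto. lra. Qed.

Lemma cyc_off e j : (e < m)%nat -> T j = false -> cyc G pth e j = if Nat.eqb j e then 1 else 0.
Proof. intros He Hj. destruct (edge_n e He). unfold cyc. rewrite pth_supp by auto. lra. Qed.

Lemma pe_tree e : (e < m)%nat -> T e = true -> forall j, (j < m)%nat -> pe e j = if Nat.eqb j e then 1 else 0.
Proof. intros He HT j Hj. destruct (edge_n e He).
  assert (Hcz := circ_zero' (fun j => 1 * pe e j + (-1) * (if Nat.eqb j e then 1 else 0))).
  assert (Hz : 1 * pe e j + (-1) * (if Nat.eqb j e then 1 else 0) = 0).
  { apply Hcz; auto.
    - intros c Hc. rewrite div_lin, div_delta by auto. unfold pe. rewrite pth_div by auto.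
      rewrite (Bmat_eq G WF) by auto. lra.
    - intros k Hk HTk. unfold pe. rewrite pth_supp by auto. destruct (Nat.eqb_spec k e); [congruence|lra]. }
  lra. Qed.

Lemma pth_concat a b j : (a < n)%nat -> (b < n)%nat -> (j < m)%nat ->
  path_flow (pth a s) j = path_flow (pth a b) j + path_flow (pth b s) j.
Proof. intros Ha Hb Hj.
  assert (Hcz := circ_zero' (fun j => 1 * path_flow (pth a s) j + (-1) * (1 * path_flow (pth a b) j + 1 * path_flow (pth b s) j))).
  assert (Hz : 1 * path_flow (pth a s) j + (-1) * (1 * path_flow (pth a b) j + 1 * path_flow (pth b s) j) = 0).
  { apply Hcz; auto.
    - intros c Hc. rewrite !div_lin, !pth_div by auto. lra.
    - intros k Hk HTk. rewrite !pth_supp by auto. lra. }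
  lra. Qed.

Lemma volt_ip f a : (a < n)%nat -> volt G pth s f a = ip (path_flow (pth a s)) f.
Proof. intros Ha. unfold ip.
  rewrite (rsum_ext m _ (fun j => path_flow (pth a s) j * (res G j * f j))) by (intros; lra).
  rewrite (pf_exchange G) by (intros st Hi; eapply (walk_steps G T a s); eauto; apply pth_walk; auto).
  unfold volt. change (lsum (pth a s) (fun st => (if snd st then 1 else -1) * res G (fst st) * f (fst st)) =
    lsum (pth a s) (fun st => sgnst st * (res G (fst st) * f (fst st)))).
  apply lsum_ext. intros. unfold sgnst. lra. Qed.

Lemma volt_diff f e : (e < m)%nat -> volt G pth s f (ea G e) - volt G pth s f (eb G e) = ip (pe e) f.
Proof. intros He. destruct (edge_n e He). rewrite !volt_ip by auto.
  unfold ip, pe. rewrite <- rsum_minus. apply rsum_ext. intros j Hj.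
  rewrite (pth_concat (ea G e) (eb G e) j) by auto. lra. Qed.

Lemma ip_delta e y : (e < m)%nat -> ip (fun j => if Nat.eqb j e then 1 else 0) y = res G e * y e.
Proof. intros He. unfold ip. rewrite <- (rsum_delta m e (fun j => res G j * y j)) by auto.
  apply rsum_ext. intros j Hj. destruct (Nat.eqb j e); lra. Qed.

Lemma volt_diff_tree f e : (e < m)%nat -> T e = true ->
  volt G pth s f (ea G e) - volt G pth s f (eb G e) = res G e * f e.
Proof. intros He HT. rewrite volt_diff by auto. rewrite <- ip_delta by auto.
  apply ip_ext; [|auto]. intros; apply pe_tree; auto. Qed.

Lemma volt_diff_off f e : (e < m)%nat ->
  volt G pth s f (ea G e) - volt G pth s f (eb G e) = res G e * f e - Defs.Delta G pth e f.
Proof. intros He. rewrite volt_diff by auto. rewrite Delta_ip, (ip_sym f (cyc G pth e)), <- ip_delta by auto.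
  rewrite (ip_ext (cyc G pth e) (fun j => 1 * (if Nat.eqb j e then 1 else 0) + (-1) * pe e j) f f)
    by (intros; unfold cyc, pe; lra).
  rewrite ip_lin. lra. Qed.


Variable chi fstar : nat -> R.
Hypothesis Hfs : feasible G chi fstar.
Hypothesis Hmin : forall f, feasible G chi f -> energy G fstar <= energy G f.

Lemma feas_div f : feasible G chi f -> forall c, (c < n)%nat -> div f c = chi c.
Proof. intros H c Hc. apply H; auto. Qed.

Lemma upd_feas e f : (e < m)%nat -> feasible G chi f -> feasible G chi (update G pth e f).
Proof. intros He Hf c Hc. change (div (update G pth e f) c = chi c).
  rewrite (div_ext _ (fun j => 1 * f j + (- (Defs.Delta G pth e f / Rcyc G pth e)) * cyc G pth e j))
    by (intros; unfold update; lra).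
  rewrite div_lin, (cyc_circ e He c Hc), feas_div by auto. lra. Qed.

Lemma ip_expand x y t : ip (fun j => 1 * x j + t * y j) (fun j => 1 * x j + t * y j) =
  ip x x + 2 * t * ip x y + t * t * ip y y.
Proof. rewrite ip_lin. rewrite (ip_sym x), (ip_sym y). rewrite !ip_lin. rewrite (ip_sym y x). ring. Qed.

Lemma fstar_opt e : (e < m)%nat -> ip fstar (cyc G pth e) = 0.
Proof. intros He.
  assert (H : forall t, 0 <= ip (cyc G pth e) (cyc G pth e) * t * t - 2 * (- ip fstar (cyc G pth e)) * t + 0).
  { intros t. assert (Hf : feasible G chi (fun j => 1 * fstar j + t * cyc G pth e j)).
    { intros k Hk. change (div (fun j => 1 * fstar j + t * cyc G pth e j) k = chi k).
      rewrite div_lin, (cyc_circ e He k Hk), feas_div by auto. lra. }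
    apply Hmin in Hf. rewrite !energy_ip, ip_expand in Hf. lra. }
  apply quad_cs in H; [|apply ip_self_nonneg]. nra. Qed.

Lemma div_sum F c : div (fun j => rsum m (fun e => F e j)) c = rsum m (fun e => div (F e) c).
Proof. unfold div. rewrite (rsum_ext m _ (fun j => rsum m (fun e => Bmat G j c * F e j)))
  by (intros; rewrite <- rsum_scal; reflexivity). apply rsum_swap. Qed.

Lemma decomp f : feasible G chi f -> forall j, (j < m)%nat ->
  f j - fstar j = rsum m (fun e => if T e then 0 else (f e - fstar e) * cyc G pth e j).
Proof. intros Hf j Hj.
  set (F := fun e j => if T e then 0 else (f e - fstar e) * cyc G pth e j).
  assert (Hz : (1 * f j + (-1) * fstar j) + (-1) * rsum m (fun e => F e j) = 0).
  { apply (circ_zero' (fun j => (1 * f j + (-1) * fstar j) + (-1) * rsum m (fun e => F e j))); auto.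
    - intros c Hc. rewrite (div_ext _ (fun j => 1 * (1 * f j + (-1) * fstar j) + (-1) * rsum m (fun e => F e j)))
        by (intros; lra). rewrite !div_lin, div_sum, !feas_div by auto.
      rewrite (rsum_ext m _ (fun _ => 0)), rsum_zero; [lra|].
      intros e He. unfold F. destruct (T e).
      + rewrite (div_ext _ (fun _ => 0 * 0 + 0 * 0)) by (intros; lra). rewrite div_lin. lra.
      + rewrite (div_ext _ (fun j => (f e - fstar e) * cyc G pth e j + 0 * 0)) by (intros; lra).
        rewrite div_lin, (cyc_circ e He c Hc). lra.
    - intros k Hk HTk. cbv beta.
      assert (Hsum : rsum m (fun e => F e k) = f k - fstar k).
      { rewrite <- (rsum_delta m k (fun e => f e - fstar e)) by auto. apply rsum_ext.
        intros e He. unfold F. destruct (Nat.eqb_spec e k).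
        * subst. rewrite HTk. rewrite cyc_off, Nat.eqb_refl by auto. lra.
        * destruct (T e) eqn:HTe; [lra|]. rewrite cyc_off by auto.
          destruct (Nat.eqb_spec k e); [congruence|lra]. }
      rewrite Hsum. lra. }
  change (f j - fstar j = rsum m (fun e => F e j)). lra. Qed.

Definition gfl f := fun j => f j - fstar j.

Lemma ip_decomp f u : feasible G chi f ->
  ip u (gfl f) = rsum m (fun e => if T e then 0 else (f e - fstar e) * ip u (cyc G pth e)).
Proof. intros Hf. unfold ip at 1, gfl.
  rewrite (rsum_ext m _ (fun j => rsum m (fun e => u j * res G j * (if T e then 0 else (f e - fstar e) * cyc G pth e j)))).
  2:{ intros j Hj. rewrite rsum_scal. rewrite decomp by auto. reflexivity. }
  rewrite rsum_swap. apply rsum_ext. intros e He. destruct (T e).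
  - rewrite (rsum_ext m _ (fun _ => 0)) by (intros; lra). apply rsum_zero.
  - unfold ip. rewrite <- rsum_scal. apply rsum_ext. intros; lra. Qed.

Definition gp f := energy G f - energy G fstar.

Lemma gp_nonneg f : feasible G chi f -> 0 <= gp f.
Proof. intros Hf. unfold gp. apply Hmin in Hf. lra. Qed.

Lemma gp_ip f : feasible G chi f -> gp f = ip (gfl f) (gfl f).
Proof. intros Hf. unfold gp. rewrite !energy_ip.
  assert (H0 : ip fstar (gfl f) = 0).
  { rewrite ip_decomp by auto. rewrite (rsum_ext m _ (fun _ => 0)), rsum_zero; auto.
    intros e He. destruct (T e); [lra|]. rewrite fstar_opt by auto. lra. }
  rewrite (ip_ext f (fun j => 1 * fstar j + 1 * gfl f j) f (fun j => 1 * fstar j + 1 * gfl f j))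
    by (intros; unfold gfl; lra).
  rewrite ip_expand, H0. lra. Qed.

Lemma Delta_g f e : feasible G chi f -> (e < m)%nat -> Defs.Delta G pth e f = ip (gfl f) (cyc G pth e).
Proof. intros Hf He. rewrite Delta_ip.
  rewrite (ip_ext (gfl f) (fun j => 1 * f j + (-1) * fstar j) (cyc G pth e) (cyc G pth e))
    by (intros; unfold gfl; lra).
  rewrite ip_lin, fstar_opt by auto. lra. Qed.

Lemma gp_sum f : feasible G chi f ->
  gp f = rsum m (fun e => if T e then 0 else (f e - fstar e) * Defs.Delta G pth e f).
Proof. intros Hf. rewrite gp_ip, ip_decomp by auto. apply rsum_ext. intros e He.
  destruct (T e); auto. rewrite Delta_g by auto. reflexivity. Qed.

Definition Sf f := rsum m (fun e => if T e then 0 else Defs.Delta G pth e f * Defs.Delta G pth e f / res G e).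

Lemma Delta_sq f e : feasible G chi f -> (e < m)%nat ->
  Defs.Delta G pth e f * Defs.Delta G pth e f <= Rcyc G pth e * gp f.
Proof. intros Hf He. rewrite Delta_g, Rcyc_ip, gp_ip by auto. apply ip_cs. Qed.

Lemma tau_def : tau G T pth = rsum m (fun e => if T e then 0 else Rcyc G pth e / res G e).
Proof. reflexivity. Qed.

Lemma S_le f : feasible G chi f -> Sf f <= tau G T pth * gp f.
Proof. intros Hf. rewrite tau_def, <- rsum_scalr. apply rsum_le. intros e He.
  pose proof (res_pos G WF e He). destruct (T e); [lra|].
  pose proof (Delta_sq f e Hf He). unfold Rdiv.
  replace (Rcyc G pth e * / res G e * gp f) with (Rcyc G pth e * gp f * / res G e) by ring.
  apply Rmult_le_compat_r; [apply Rlt_le, Rinv_0_lt_compat; auto|auto]. Qed.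

Definition psi := volt G pth s fstar.

Lemma Dpsi e : (e < m)%nat -> psi (ea G e) - psi (eb G e) = res G e * fstar e.
Proof. intros He. unfold psi. destruct (T e) eqn:HT.
  - apply volt_diff_tree; auto.
  - rewrite volt_diff_off, Delta_ip, fstar_opt by auto. lra. Qed.

Definition Qe (x : nat -> R) := rsum m (fun e => (x (ea G e) - x (eb G e)) * (x (ea G e) - x (eb G e)) / res G e).

Lemma Qe_vpsi f : feasible G chi f -> Qe (fun a => volt G pth s f a - psi a) = Sf f - gp f.
Proof. intros Hf.
  assert (E : Qe (fun a => volt G pth s f a - psi a) =
    rsum m (fun e => (f e - fstar e) * res G e * (f e - fstar e)) - 2 * gp f + Sf f).
  { rewrite gp_sum by auto. unfold Sf. rewrite <- rsum_scal, <- rsum_minus, <- rsum_plus.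
    unfold Qe. apply rsum_ext. intros e He. pose proof (res_pos G WF e He).
    pose proof (Dpsi e He) as Hp.
    replace (volt G pth s f (ea G e) - psi (ea G e) - (volt G pth s f (eb G e) - psi (eb G e))) with
      ((volt G pth s f (ea G e) - volt G pth s f (eb G e)) - (psi (ea G e) - psi (eb G e))) by ring.
    rewrite Hp. destruct (T e) eqn:HT.
    - rewrite volt_diff_tree by auto. field. lra.
    - rewrite volt_diff_off by auto. field. lra. }
  rewrite E. rewrite gp_ip by auto. unfold gfl, ip. lra. Qed.


Lemma Bsum e x : (e < m)%nat -> rsum n (fun u => Bmat G e u * x u) = x (ea G e) - x (eb G e).
Proof. intros He. destruct (edge_n e He).
  rewrite (rsum_ext n _ (fun u => (if Nat.eqb u (ea G e) then x u else 0) - (if Nat.eqb u (eb G e) then x u else 0))).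
  - rewrite rsum_minus, !rsum_delta by auto. reflexivity.
  - intros u Hu. rewrite (Bmat_eq G WF) by auto. unfold indv.
    destruct (Nat.eqb u (ea G e)); destruct (Nat.eqb u (eb G e)); lra. Qed.

Lemma Lapvec x u : matvec n (Lap G) x u = rsum m (fun e => Bmat G e u * / res G e * (x (ea G e) - x (eb G e))).
Proof. unfold matvec, Lap.
  rewrite (rsum_ext n _ (fun v => rsum m (fun e => Bmat G e u * / res G e * (Bmat G e v * x v))))
    by (intros; rewrite <- rsum_scalr; apply rsum_ext; intros; ring).
  rewrite rsum_swap. apply rsum_ext. intros e He. rewrite rsum_scal, Bsum by auto. reflexivity. Qed.

Lemma quadL x : rsum n (fun u => rsum n (fun v => x u * Lap G u v * x v)) = Qe x.
Proof.
  rewrite (rsum_ext n _ (fun u => x u * matvec n (Lap G) x u)).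
  2:{ intros u Hu. unfold matvec. rewrite <- rsum_scal. apply rsum_ext. intros; ring. }
  rewrite (rsum_ext n _ (fun u => rsum m (fun e => Bmat G e u * x u * (/ res G e * (x (ea G e) - x (eb G e)))))).
  2:{ intros u Hu. rewrite Lapvec, <- rsum_scal. apply rsum_ext. intros; ring. }
  rewrite rsum_swap. unfold Qe. apply rsum_ext. intros e He. rewrite rsum_scalr, Bsum by auto.
  unfold Rdiv. ring. Qed.

Lemma Lnorm_Qe x : Lnorm G x = sqrt (Qe x).
Proof. unfold Lnorm. rewrite quadL. reflexivity. Qed.

Lemma Lpsi u : (u < n)%nat -> matvec n (Lap G) psi u = chi u.
Proof. intros Hu. rewrite Lapvec. rewrite <- (Hfs u Hu). apply rsum_ext. intros e He.
  rewrite Dpsi by auto. pose proof (res_pos G WF e He). field. lra. Qed.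

Variable X : nat -> nat -> R.
Hypothesis Hpinv : is_pinv n (Lap G) X.

Definition phi := matvec n X chi.

Lemma LX u : (u < n)%nat -> matvec n (Lap G) phi u = matvec n (Lap G) psi u.
Proof. intros Hu. unfold phi. unfold matvec at 1 2.
  set (L := Lap G).
  transitivity (rsum n (fun v => rsum n (fun k => rsum n (fun l => L u v * X v k * L k l * psi l)))).
  { apply rsum_ext. intros v Hv. unfold matvec. rewrite <- rsum_scal. apply rsum_ext. intros k Hk.
    rewrite <- (Lpsi k Hk). unfold matvec. fold L. rewrite <- rsum_scal, <- rsum_scal. apply rsum_ext. intros; ring. }
  transitivity (rsum n (fun l => rsum n (fun v => rsum n (fun k => L u v * X v k * L k l * psi l)))).
  { rewrite (rsum_ext n _ (fun v => rsum n (fun l => rsum n (fun k => L u v * X v k * L k l * psi l))))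
      by (intros; apply rsum_swap). apply rsum_swap. }
  apply rsum_ext. intros l Hl. destruct (Hpinv u l Hu Hl) as [H1 _]. fold L in H1. rewrite <- H1.
  unfold matmul. rewrite <- rsum_scalr. apply rsum_ext. intros v Hv.
  rewrite <- rsum_scal, <- rsum_scalr. apply rsum_ext. intros; ring. Qed.

Lemma Dphi e : (e < m)%nat -> phi (ea G e) - phi (eb G e) = psi (ea G e) - psi (eb G e).
Proof. intros He. set (d := fun a => phi a - psi a).
  assert (Hd : forall u, (u < n)%nat -> matvec n (Lap G) d u = 0).
  { intros u Hu. assert (matvec n (Lap G) d u = matvec n (Lap G) phi u - matvec n (Lap G) psi u).
    { unfold matvec. rewrite <- rsum_minus. apply rsum_ext. intros; unfold d; ring. }
    rewrite H, LX by auto. lra. }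
  assert (HQ : Qe d = 0).
  { rewrite <- quadL. rewrite (rsum_ext n _ (fun _ => 0)), rsum_zero; auto.
    intros u Hu. rewrite <- (Rmult_0_r (d u)), <- (Hd u Hu). unfold matvec. rewrite <- rsum_scal.
    apply rsum_ext. intros; ring. }
  assert (Hnn : forall e, (e < m)%nat -> 0 <= (d (ea G e) - d (eb G e)) * (d (ea G e) - d (eb G e)) / res G e).
  { intros e' He'. pose proof (res_pos G WF e' He'). unfold Rdiv. apply Rmult_le_pos.
    - apply Rle_0_sqr.
    - apply Rlt_le, Rinv_0_lt_compat; auto. }
  pose proof (rsum_zero_nonneg m _ Hnn HQ e He) as Hz. cbv beta in Hz.
  pose proof (res_pos G WF e He).
  assert (Hsq : (d (ea G e) - d (eb G e)) * (d (ea G e) - d (eb G e)) = 0).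
  { apply (Rmult_eq_reg_r (/ res G e)); [|apply Rgt_not_eq, Rlt_gt, Rinv_0_lt_compat; auto].
    unfold Rdiv in Hz. lra. }
  apply Rmult_integral in Hsq. unfold d in Hsq. destruct Hsq; lra. Qed.

Lemma Lnorm_volt f : feasible G chi f ->
  Lnorm G (fun a => volt G pth s f a - matvec n X chi a) = sqrt (Sf f - gp f).
Proof. intros Hf. rewrite Lnorm_Qe, <- Qe_vpsi by auto. f_equal. unfold Qe. apply rsum_ext.
  intros e He. fold phi. pose proof (Dphi e He). replace (volt G pth s f (ea G e) - phi (ea G e) - (volt G pth s f (eb G e) - phi (eb G e)))
    with (volt G pth s f (ea G e) - psi (ea G e) - (volt G pth s f (eb G e) - psi (eb G e))) by lra.
  reflexivity. Qed.

Lemma Lnorm_phi : Lnorm G (matvec n X chi) = sqrt (energy G fstar).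
Proof. rewrite Lnorm_Qe. f_equal. unfold Qe. fold phi. apply rsum_ext. intros e He.
  rewrite Dphi, Dpsi by auto. pose proof (res_pos G WF e He). field. lra. Qed.


Hypothesis Hoff : exists e, (e < m)%nat /\ T e = false.

Lemma cyc_self e : (e < m)%nat -> T e = false -> cyc G pth e e = 1.
Proof. intros. rewrite cyc_off, Nat.eqb_refl by auto. reflexivity. Qed.

Lemma ip_self_terms x : forall j, (j < m)%nat -> 0 <= x j * res G j * x j.
Proof. intros j Hj. pose proof (res_pos G WF j Hj). rewrite Rmult_comm, <- Rmult_assoc.
  apply Rmult_le_pos; [|lra]. nra. Qed.

Lemma Rcyc_ge e : (e < m)%nat -> T e = false -> res G e <= Rcyc G pth e.
Proof. intros He HT. rewrite Rcyc_ip. unfold ip.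
  pose proof (rsum_single_le m (fun j => cyc G pth e j * res G j * cyc G pth e j) e (ip_self_terms _) He) as H.
  cbv beta in H. rewrite cyc_self in H by auto. lra. Qed.

Lemma tau_terms : forall e, (e < m)%nat -> 0 <= (if T e then 0 else Rcyc G pth e / res G e).
Proof. intros e He. destruct (T e); [lra|]. pose proof (res_pos G WF e He).
  unfold Rdiv. apply Rmult_le_pos; [rewrite Rcyc_ip; apply ip_self_nonneg|apply Rlt_le, Rinv_0_lt_compat; auto]. Qed.

Lemma tau_ge1 : 1 <= tau G T pth.
Proof. destruct Hoff as [e0 [He0 HT0]]. rewrite tau_def.
  pose proof (rsum_single_le m _ e0 tau_terms He0) as H. cbv beta in H. rewrite HT0 in H.
  pose proof (Rcyc_ge e0 He0 HT0). pose proof (res_pos G WF e0 He0).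
  assert (1 <= Rcyc G pth e0 / res G e0).
  { apply (Rmult_le_reg_r (res G e0)); auto. unfold Rdiv. rewrite Rmult_assoc, Rinv_l by lra. lra. }
  lra. Qed.

Definition wgt e := if T e then 0 else prob G T pth e.

Lemma wgt_nonneg e : (e < m)%nat -> 0 <= wgt e.
Proof. intros He. unfold wgt, prob. pose proof (tau_terms e He). pose proof tau_ge1.
  destruct (T e); [lra|]. pose proof (res_pos G WF e He).
  replace (Rcyc G pth e / (res G e * tau G T pth)) with (Rcyc G pth e / res G e * / tau G T pth) by (field; lra).
  apply Rmult_le_pos; auto. apply Rlt_le, Rinv_0_lt_compat. lra. Qed.

Lemma wgt_sum : rsum m wgt = 1.
Proof. pose proof tau_ge1.
  transitivity (rsum m (fun e => if T e then 0 else Rcyc G pth e / res G e) * / tau G T pth).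
  2:{ rewrite <- tau_def. field. lra. }
  rewrite <- rsum_scalr. apply rsum_ext. intros e He. unfold wgt, prob.
  pose proof (res_pos G WF e He). destruct (T e); [lra|]. field. split; lra. Qed.

Lemma energy_upd e f : (e < m)%nat -> T e = false ->
  energy G (update G pth e f) = energy G f - Defs.Delta G pth e f * Defs.Delta G pth e f / Rcyc G pth e.
Proof. intros He HT. pose proof (Rcyc_ge e He HT). pose proof (res_pos G WF e He).
  rewrite !energy_ip.
  rewrite (ip_ext (update G pth e f) (fun j => 1 * f j + (- (Defs.Delta G pth e f / Rcyc G pth e)) * cyc G pth e j)
     (update G pth e f) (fun j => 1 * f j + (- (Defs.Delta G pth e f / Rcyc G pth e)) * cyc G pth e j))
    by (intros; unfold update; lra).
  rewrite ip_expand, <- Delta_ip, <- Rcyc_ip. field. lra. Qed.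

Lemma Sf_ge f : feasible G chi f -> gp f <= Sf f.
Proof. intros Hf. pose proof (Qe_vpsi f Hf) as H. assert (0 <= Qe (fun a => volt G pth s f a - psi a)).
  { unfold Qe. apply rsum_nonneg. intros e He. pose proof (res_pos G WF e He). unfold Rdiv.
    apply Rmult_le_pos; [apply Rle_0_sqr|apply Rlt_le, Rinv_0_lt_compat; auto]. }
  lra. Qed.

Lemma Eupd f : feasible G chi f ->
  rsum m (fun e => wgt e * gp (update G pth e f)) <= (1 - / tau G T pth) * gp f.
Proof. intros Hf. pose proof tau_ge1.
  assert (E : rsum m (fun e => wgt e * gp (update G pth e f)) = rsum m wgt * gp f - Sf f * / tau G T pth).
  { unfold Sf. rewrite <- !rsum_scalr, <- rsum_minus. apply rsum_ext. intros e He.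
    unfold wgt, prob. destruct (T e) eqn:HT; [lra|]. unfold gp. rewrite energy_upd by auto.
    pose proof (Rcyc_ge e He HT). pose proof (res_pos G WF e He). field. repeat split; lra. }
  rewrite E, wgt_sum. pose proof (Sf_ge f Hf).
  assert (gp f * / tau G T pth <= Sf f * / tau G T pth).
  { apply Rmult_le_compat_r; auto. apply Rlt_le, Rinv_0_lt_compat. lra. }
  lra. Qed.

Lemma expect_S k g f : expect G T pth (S k) g f = rsum m (fun e => wgt e * expect G T pth k g (update G pth e f)).
Proof. simpl. apply rsum_ext. intros e He. unfold wgt. destruct (T e); lra. Qed.

Definition qq := 1 - / tau G T pth.

Lemma qq_bounds : 0 <= qq < 1.
Proof. pose proof tau_ge1. unfold qq. split.
  - assert (/ tau G T pth <= 1). { rewrite <- Rinv_1. apply Rinv_le_contravar; lra. } lra.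
  - assert (0 < / tau G T pth) by (apply Rinv_0_lt_compat; lra). lra. Qed.

Lemma estar_nonneg : 0 <= energy G fstar.
Proof. rewrite energy_ip. apply ip_self_nonneg. Qed.

Lemma claimA K : forall f, feasible G chi f -> expect G T pth K (energy G) f <= energy G fstar + qq ^ K * gp f.
Proof. induction K as [|k IH]; intros f Hf.
  - simpl. unfold gp. lra.
  - rewrite expect_S. pose proof qq_bounds. pose proof (pow_le qq k (proj1 H)).
    apply Rle_trans with (rsum m (fun e => wgt e * (energy G fstar + qq ^ k * gp (update G pth e f)))).
    + apply rsum_le. intros e He. apply Rmult_le_compat_l; [apply wgt_nonneg; auto|].
      apply IH. apply upd_feas; auto.
    + rewrite (rsum_ext m _ (fun e => wgt e * energy G fstar + qq ^ k * (wgt e * gp (update G pth e f))))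
        by (intros; ring).
      rewrite rsum_plus, rsum_scalr, rsum_scal, wgt_sum. pose proof (Eupd f Hf).
      simpl pow. fold qq in H1. nra. Qed.

Lemma jensen (w x : nat -> R) : (forall e, (e < m)%nat -> 0 <= w e) -> rsum m w = 1 ->
  (forall e, (e < m)%nat -> 0 <= x e) ->
  rsum m (fun e => w e * sqrt (x e)) <= sqrt (rsum m (fun e => w e * x e)).
Proof. intros Hw Hsw Hx.
  assert (HC : 0 <= rsum m (fun e => w e * sqrt (x e))).
  { apply rsum_nonneg. intros e He. apply Rmult_le_pos; auto. apply sqrt_pos. }
  assert (H : rsum m (fun e => w e * sqrt (x e)) * rsum m (fun e => w e * sqrt (x e)) <= rsum m w * rsum m (fun e => w e * x e)).
  { apply quad_cs; [apply rsum_nonneg; auto|]. intros t.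
    assert (E : rsum m (fun e => w e * ((t - sqrt (x e)) * (t - sqrt (x e)))) =
       rsum m w * t * t - 2 * rsum m (fun e => w e * sqrt (x e)) * t + rsum m (fun e => w e * x e)).
    { rewrite <- !rsum_scalr, <- rsum_scal, <- rsum_scalr, <- rsum_minus, <- rsum_plus. apply rsum_ext.
      intros e He. pose proof (sqrt_sqrt (x e) (Hx e He)). nra. }
    rewrite <- E. apply rsum_nonneg. intros e He. apply Rmult_le_pos; auto. apply Rle_0_sqr. }
  rewrite Hsw, Rmult_1_l in H. rewrite <- (sqrt_square (rsum m (fun e => w e * sqrt (x e)))) by auto.
  apply sqrt_le_1_alt. auto. Qed.

Lemma claimB K : forall f, feasible G chi f ->
  expect G T pth K (fun f => Lnorm G (fun a => volt G pth s f a - matvec n X chi a)) f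
  <= sqrt (tau G T pth * qq ^ K * gp f).
Proof. pose proof tau_ge1. pose proof qq_bounds. induction K as [|k IH]; intros f Hf.
  - simpl. rewrite Lnorm_volt by auto. apply sqrt_le_1_alt. pose proof (S_le f Hf). pose proof (gp_nonneg f Hf). lra.
  - rewrite expect_S. pose proof (pow_le qq k (proj1 H0)).
    apply Rle_trans with (rsum m (fun e => wgt e * sqrt (tau G T pth * qq ^ k * gp (update G pth e f)))).
    + apply rsum_le. intros e He. apply Rmult_le_compat_l; [apply wgt_nonneg; auto|].
      apply IH. apply upd_feas; auto.
    + eapply Rle_trans; [apply jensen|].
      * apply wgt_nonneg.
      * apply wgt_sum.
      * intros e He. pose proof (gp_nonneg _ (upd_feas e f He Hf)).
        apply Rmult_le_pos; [|auto]. apply Rmult_le_pos; lra.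
      * apply sqrt_le_1_alt.
        rewrite (rsum_ext m _ (fun e => tau G T pth * qq ^ k * (wgt e * gp (update G pth e f)))) by (intros; ring).
        rewrite rsum_scal. pose proof (Eupd f Hf). fold qq in H2. simpl pow.
        assert (0 <= tau G T pth * qq ^ k) by (apply Rmult_le_pos; lra).
        replace (tau G T pth * (qq * qq ^ k) * gp f) with (tau G T pth * qq ^ k * (qq * gp f)) by ring.
        apply Rmult_le_compat_l; auto. Qed.


Variable f0 : nat -> R.
Hypothesis Hf0 : feasible G chi f0.
Hypothesis Hf0s : supported_on G T f0.

Lemma f0_decomp j : (j < m)%nat -> f0 j = rsum m (fun e => fstar e * pe e j).
Proof. intros Hj.
  assert (Hz : 1 * f0 j + (-1) * rsum m (fun e => fstar e * pe e j) = 0).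
  { apply (circ_zero' (fun j => 1 * f0 j + (-1) * rsum m (fun e => fstar e * pe e j))); auto.
    - intros c Hc. rewrite div_lin, div_sum, feas_div by auto.
      rewrite (rsum_ext m _ (fun e => Bmat G e c * fstar e)).
      + change (rsum m (fun e => Bmat G e c * fstar e)) with (div fstar c). rewrite feas_div by auto. lra.
      + intros e He. destruct (edge_n e He).
        rewrite (div_ext _ (fun j => fstar e * pe e j + 0 * 0)) by (intros; lra).
        rewrite div_lin. unfold pe. rewrite pth_div, (Bmat_eq G WF) by auto. lra.
    - intros k Hk HTk. cbv beta. rewrite Hf0s by auto.
      rewrite (rsum_ext m _ (fun _ => 0)), rsum_zero; [lra|].
      intros e He. destruct (edge_n e He). unfold pe. rewrite pth_supp by auto. lra. }
  lra. Qed.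

Lemma energy_f0_sum : energy G f0 = rsum m (fun e => fstar e * ip (pe e) f0).
Proof. rewrite energy_ip. unfold ip at 1.
  rewrite (rsum_ext m _ (fun j => rsum m (fun e => fstar e * (pe e j * res G j * f0 j)))).
  - rewrite rsum_swap. apply rsum_ext. intros e He. unfold ip. apply rsum_scal.
  - intros j Hj. rewrite (f0_decomp j Hj) at 1. rewrite <- !rsum_scalr. apply rsum_ext. intros; ring. Qed.

Lemma pe_self e : (e < m)%nat -> ip (pe e) (pe e) = path_res G (pth (ea G e) (eb G e)).
Proof. intros He. destruct (edge_n e He). destruct (Hpth (ea G e) (eb G e)) as [Hw Hn]; auto.
  unfold ip, pe. apply (pf_self G T _ _ _ Hw Hn). Qed.

Lemma path_res_nonneg e : (e < m)%nat -> 0 <= path_res G (pth (ea G e) (eb G e)).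
Proof. intros He. destruct (edge_n e He). change (0 <= lsum (pth (ea G e) (eb G e)) (fun st => res G (fst st))).
  apply lsum_nonneg. intros st Hi. destruct (walk_steps G T _ _ _ (pth_walk (ea G e) (eb G e) H H0) st Hi) as [Hm _].
  apply Rlt_le, res_pos; auto. Qed.

Lemma stretch_nonneg e : (e < m)%nat -> 0 <= stretch G pth e.
Proof. intros He. unfold stretch. apply Rmult_le_pos; [apply Rlt_le, Rinv_0_lt_compat, res_pos; auto|].
  apply path_res_nonneg; auto. Qed.

Lemma stT_pos : 0 < stT G pth.
Proof. destruct Hoff as [e0 [He0 HT0]]. unfold stT.
  pose proof (rsum_single_le m _ e0 stretch_nonneg He0) as H. eapply Rlt_le_trans; [|exact H].
  destruct (edge_n e0 He0). destruct (edge_ok G WF e0 He0) as [_ [_ [Hne _]]].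
  pose proof (pth_walk _ _ H0 H1) as Hw.
  destruct (pth (ea G e0) (eb G e0)) as [|st q] eqn:Ep; [simpl in Hw; congruence|].
  unfold stretch. rewrite Ep. apply Rmult_lt_0_compat; [apply Rinv_0_lt_compat, res_pos; auto|].
  change (0 < lsum (st :: q) (fun st => res G (fst st))). rewrite lsum_cons.
  destruct Hw as [Hm _]. pose proof (res_pos G WF _ Hm).
  assert (0 <= lsum q (fun st => res G (fst st))).
  { apply lsum_nonneg. intros st' Hi.
    assert (In st' (pth (ea G e0) (eb G e0))) by (rewrite Ep; right; auto).
    destruct (walk_steps G T _ _ _ (pth_walk _ _ H0 H1) st' H3) as [Hm' _]. apply Rlt_le, res_pos; auto. }
  lra. Qed.

Lemma f0_bound : energy G f0 <= stT G pth * energy G fstar.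
Proof. pose proof (wcs m (res G) fstar (fun e => ip (pe e) f0) (fun i Hi => res_pos G WF i Hi)) as Hw.
  cbv beta in Hw. rewrite <- energy_f0_sum in Hw.
  rewrite (rsum_ext m (fun i => res G i * fstar i * fstar i) (fun i => fstar i * res G i * fstar i)) in Hw
    by (intros; ring).
  change (rsum m (fun i => fstar i * res G i * fstar i)) with (energy G fstar) in Hw.
  assert (Hb : rsum m (fun i => ip (pe i) f0 * ip (pe i) f0 / res G i) <= energy G f0 * stT G pth).
  { unfold stT. rewrite <- rsum_scal. apply rsum_le. intros e He. pose proof (res_pos G WF e He).
    pose proof (ip_cs (pe e) f0). rewrite pe_self in H0 by auto. rewrite <- energy_ip in H0.
    unfold stretch. unfold Rdiv.
    replace (energy G f0 * (/ res G e * path_res G (pth (ea G e) (eb G e)))) with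
      (energy G f0 * path_res G (pth (ea G e) (eb G e)) * / res G e) by ring.
    apply Rmult_le_compat_r; [apply Rlt_le, Rinv_0_lt_compat; auto|auto]. }
  pose proof estar_nonneg. pose proof stT_pos.
  assert (Hx0 : 0 <= energy G f0) by (rewrite energy_ip; apply ip_self_nonneg).
  assert (Hsq : energy G f0 * energy G f0 <= energy G fstar * (energy G f0 * stT G pth)).
  { eapply Rle_trans; [exact Hw|]. apply Rmult_le_compat_l; auto. }
  destruct (Rle_lt_or_eq_dec 0 _ Hx0) as [Hp|Hz]; [|rewrite <- Hz; nra].
  apply (Rmult_le_reg_l (energy G f0)); auto. nra. Qed.

End Main.


Lemma ceilR_ge x : x <= IZR (ceilR x).
Proof. unfold ceilR. destruct (archimed (- x)) as [H1 H2].
  rewrite opp_IZR, minus_IZR. lra. Qed.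

Lemma to_nat_ge z : IZR z <= INR (Z.to_nat z).
Proof. destruct (Z_le_gt_dec 0 z) as [H|H].
  - rewrite INR_IZR_INZ, Z2Nat.id by auto. lra.
  - destruct z; try lia. rewrite Z2Nat.inj_neg. simpl. apply IZR_le. lia. Qed.

Lemma exp_pow x k : exp x ^ k = exp (INR k * x).
Proof. induction k.
  - simpl. rewrite Rmult_0_l, exp_0. reflexivity.
  - simpl pow. rewrite IHk, <- exp_plus, S_INR. f_equal. ring. Qed.

Lemma exp_le a b : a <= b -> exp a <= exp b.
Proof. intros H. destruct (Rle_lt_or_eq_dec a b H) as [H1|H1]; [apply Rlt_le, exp_increasing; auto|rewrite H1; lra]. Qed.

Lemma arith (tau stT eps : R) (K : nat) : 1 <= tau -> 0 < stT -> 0 < eps ->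
  K = Z.to_nat (ceilR (tau * ln (stT * tau / eps))) -> (1 - / tau) ^ K <= eps / (stT * tau).
Proof. intros Ht Hs He HK.
  assert (HKy : tau * ln (stT * tau / eps) <= INR K).
  { rewrite HK. eapply Rle_trans; [apply ceilR_ge|apply to_nat_ge]. }
  assert (Hi : 0 < / tau) by (apply Rinv_0_lt_compat; lra).
  assert (Hi1 : / tau <= 1) by (rewrite <- Rinv_1; apply Rinv_le_contravar; lra).
  eapply Rle_trans. { apply (pow_incr _ (exp (- / tau))). split; [lra|]. pose proof (exp_ineq1_le (- / tau)). lra. }
  rewrite exp_pow.
  assert (Hpos : 0 < stT * tau / eps) by (apply Rdiv_lt_0_compat; nra).
  replace (eps / (stT * tau)) with (exp (- ln (stT * tau / eps))).
  - apply exp_le. assert (ln (stT * tau / eps) <= INR K * / tau).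
    { apply (Rmult_le_reg_l tau); [lra|]. rewrite <- Rmult_assoc, (Rmult_comm tau (INR K)), Rmult_assoc, Rinv_r by lra. lra. }
    lra.
  - rewrite exp_Ropp, exp_ln by auto. field. split; lra. Qed.


Theorem theorem3p1 :
  forall (G : graph) (T : nat -> bool) (pth : nat -> nat -> list (nat * bool)) (s : nat)
         (chi f0 fstar : nat -> R) (X : nat -> nat -> R) (eps : R),
    well_formed G ->
    spanning_tree G T ->
    (forall a b, (a < nV G)%nat -> (b < nV G)%nat -> tree_path G T a b (pth a b)) ->
    (s < nV G)%nat ->
    rsum (nV G) chi = 0 ->
    0 < eps < 1 ->
    (exists e, (e < nE G)%nat /\ T e = false) ->
    (* f_0: the feasible flow supported on T *)
    feasible G chi f0 -> supported_on G T f0 ->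
    (* f^*: the feasible energy minimizer *)
    feasible G chi fstar -> (forall f, feasible G chi f -> energy G fstar <= energy G f) ->
    (* X = L^dagger *)
    is_pinv (nV G) (Lap G) X ->
    let K := Z.to_nat (ceilR (tau G T pth * ln (stT G pth * tau G T pth / eps))) in
    expect G T pth K (energy G) f0 <= (1 + eps) * energy G fstar /\
    expect G T pth K
      (fun f => Lnorm G (fun a => volt G pth s f a - matvec (nV G) X chi a)) f0
      <= sqrt eps * Lnorm G (matvec (nV G) X chi).
Proof.
  intros G T pth s chi f0 fstar X eps WF HST Hpth Hs Hchi Heps Hoff Hf0 Hf0s Hfs Hmin Hpinv K.
  assert (HK : K = Z.to_nat (ceilR (tau G T pth * ln (stT G pth * tau G T pth / eps)))) by reflexivity.
  clearbody K.
  pose proof (tau_ge1 G T pth WF Hpth Hoff) as Ht.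
  pose proof (stT_pos G T pth WF Hpth Hoff) as Hst.
  pose proof (estar_nonneg G WF fstar) as He.
  pose proof (gp_nonneg G chi fstar Hmin f0 Hf0) as Hg.
  pose proof (f0_bound G T pth WF HST Hpth chi fstar Hfs Hoff f0 Hf0 Hf0s) as Hb.
  assert (Hg0 : gp G fstar f0 <= stT G pth * energy G fstar) by (unfold gp; lra).
  assert (Hq : qq G T pth ^ K <= eps / (stT G pth * tau G T pth)).
  { unfold qq. apply arith; auto; lra. }
  assert (Hq0 : 0 <= qq G T pth ^ K).
  { apply pow_le. unfold qq. assert (/ tau G T pth <= 1) by (rewrite <- Rinv_1; apply Rinv_le_contravar; lra). lra. }
  assert (Hprod : qq G T pth ^ K * gp G fstar f0 <= eps * energy G fstar / tau G T pth).
  { eapply Rle_trans. { apply Rmult_le_compat; [auto|auto|exact Hq|exact Hg0]. }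
    right. field. split; lra. }
  assert (Hdiv : eps * energy G fstar / tau G T pth <= eps * energy G fstar).
  { unfold Rdiv. rewrite <- (Rmult_1_r (eps * energy G fstar)) at 2. apply Rmult_le_compat_l; [nra|].
    rewrite <- Rinv_1. apply Rinv_le_contravar; lra. }
  split.
  - pose proof (claimA G T pth s WF HST Hpth Hs chi fstar Hfs Hmin Hoff K f0 Hf0). nra.
  - pose proof (claimB G T pth s WF HST Hpth Hs chi fstar Hfs Hmin X Hpinv Hoff K f0 Hf0) as HB.
    eapply Rle_trans; [exact HB|].
    rewrite (Lnorm_phi G T pth s WF HST Hpth Hs chi fstar Hfs Hmin X Hpinv).
    rewrite <- sqrt_mult_alt by lra. apply sqrt_le_1_alt.
    assert (tau G T pth * qq G T pth ^ K * gp G fstar f0 <= tau G T pth * (eps * energy G fstar / tau G T pth)).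
    { rewrite Rmult_assoc. apply Rmult_le_compat_l; lra. }
    replace (tau G T pth * (eps * energy G fstar / tau G T pth)) with (eps * energy G fstar) in H by (field; lra).
    exact H.
Qed.
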